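(* Fix $s>0$ and let $\Phi_s(x)=(1+e^{-sx})^{-1}$ and $\phi_s(x)=\Phi_s'(x)=se^{-sx}/(1+e^{-sx})^2$. Let $f:\mathbb{R}^3\to\mathbb{R}$ be a signed distance function whose zero-level set is a smooth surface $\mathbb{S}$, and let $\mathbf{p}(t)=\mathbf{o}+t\mathbf{v}$, $t\ge0$, be a ray with unit direction $\mathbf{v}$. Define $\sigma(t)=\phi_s(f(\mathbf{p}(t)))$, $T(t)=\exp\left(-\int_0^t\sigma(u)\,\mathrm{d}u\right)$ and $w(t)=T(t)\sigma(t)$. Let $t^*>0$ satisfy $f(\mathbf{p}(t^* ))=0$, and suppose that near $t^*$ the surface is tangentially approximated by a planar patch, i.e. $\nabla f(\mathbf{p}(t))$ is constant for $t$ in a neighborhood of $t^*$. Then $\frac{\mathrm{d}w}{\mathrm{d}t}(t^* )=-T(t^* )\phi_s(0)^2<0$; in particular $w$ does not attain a local maximum at $t^*$. *)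

(* Defs.v *)
From Stdlib Require Import Reals Lra.
From Coquelicot Require Import Coquelicot.
Open Scope R_scope.

Definition vec3 : Type := (R * R * R)%type.
Definition vadd (x y : vec3) : vec3 :=
  let '(x1, x2, x3) := x in let '(y1, y2, y3) := y in (x1 + y1, x2 + y2, x3 + y3).
Definition vscale (a : R) (x : vec3) : vec3 :=
  let '(x1, x2, x3) := x in (a * x1, a * x2, a * x3).
Definition vsub (x y : vec3) : vec3 := vadd x (vscale (-1) y).
Definition vdot (x y : vec3) : R :=
  let '(x1, x2, x3) := x in let '(y1, y2, y3) := y in x1 * y1 + x2 * y2 + x3 * y3.
Definition vnorm (x : vec3) : R := sqrt (vdot x x).

Definition Phi_s (s x : R) : R := / (1 + exp (- s * x)).
Definition phi_s (s x : R) : R := s * exp (- s * x) / (1 + exp (- s * x)) ^ 2.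

Definition signed_distance_function (f : vec3 -> R) : Prop :=
  forall x : vec3,
    (forall y, f y = 0 -> Rabs (f x) <= vnorm (vsub x y)) /\
    (forall eps, 0 < eps -> exists y, f y = 0 /\ vnorm (vsub x y) < Rabs (f x) + eps).

Definition has_gradient (f : vec3 -> R) (x g : vec3) : Prop :=
  forall eps, 0 < eps -> exists delta, 0 < delta /\
    forall y, vnorm (vsub y x) < delta ->
      Rabs (f y - f x - vdot g (vsub y x)) <= eps * vnorm (vsub y x).

Definition ray (o v : vec3) (t : R) : vec3 := vadd o (vscale t v).

Definition sigma_ray (s : R) (f : vec3 -> R) (o v : vec3) (t : R) : R :=
  phi_s s (f (ray o v t)).
Definition transmittance (s : R) (f : vec3 -> R) (o v : vec3) (t : R) : R :=
  exp (- RInt (sigma_ray s f o v) 0 t).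
Definition weight (s : R) (f : vec3 -> R) (o v : vec3) (t : R) : R :=
  transmittance s f o v t * sigma_ray s f o v t.

Definition local_max_at (w : R -> R) (t0 : R) : Prop :=
  exists delta, 0 < delta /\ forall t, Rabs (t - t0) < delta -> w t <= w t0.

(* Main.v *)
Require Import Defs.
From Stdlib Require Import Reals Lra Psatz.
From Coquelicot Require Import Coquelicot.
Open Scope R_scope.

Lemma phi_even s x : phi_s s (- x) = phi_s s x.
Proof.
  unfold phi_s.
  assert (H : exp (s * x) * exp (- s * x) = 1).
  { rewrite <- exp_plus. replace (s * x + - s * x) with 0 by ring. apply exp_0. }
  replace (- s * - x) with (s * x) by ring.
  assert (P1 : 0 < exp (s * x)) by apply exp_pos.
  assert (P2 : 0 < exp (- s * x)) by apply exp_pos.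
  field_simplify_eq; [| split; nra ].
  replace (exp (s * x)) with (/ exp (- s * x)) by (field_simplify_eq; lra).
  field_simplify_eq; try lra.
Qed.

Lemma sigma_abs s f o v t :
  sigma_ray s f o v t = phi_s s (Rabs (f (ray o v t))).
Proof.
  unfold sigma_ray. unfold Rabs. destruct (Rcase_abs _); [rewrite phi_even|]; reflexivity.
Qed.

Lemma vsub_ray o v a b : vsub (ray o v a) (ray o v b) = vscale (a - b) v.
Proof.
  destruct o as [[o1 o2] o3]; destruct v as [[v1 v2] v3].
  unfold vsub, ray, vadd, vscale. f_equal; [f_equal|]; ring.
Qed.

Lemma vnorm_scale c v : vnorm (vscale c v) = Rabs c * vnorm v.
Proof.
  destruct v as [[v1 v2] v3]. unfold vnorm, vscale, vdot.
  replace (c * v1 * (c * v1) + c * v2 * (c * v2) + c * v3 * (c * v3))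
    with (c * c * (v1 * v1 + v2 * v2 + v3 * v3)) by ring.
  rewrite sqrt_mult_alt by nra. rewrite <- (sqrt_Rsqr_abs c). reflexivity.
Qed.

Lemma vnorm_nonneg x : 0 <= vnorm x.
Proof. apply sqrt_pos. Qed.

Lemma vnorm_tri x y : vnorm (vadd x y) <= vnorm x + vnorm y.
Proof.
  destruct x as [[x1 x2] x3]; destruct y as [[y1 y2] y3].
  unfold vnorm, vadd, vdot.
  set (A := x1 * x1 + x2 * x2 + x3 * x3).
  set (B := y1 * y1 + y2 * y2 + y3 * y3).
  set (C := x1 * y1 + x2 * y2 + x3 * y3).
  assert (HA : 0 <= A) by (unfold A; nra).
  assert (HB : 0 <= B) by (unfold B; nra).
  assert (HCS : C * C <= A * B).
  { unfold A, B, C.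
    assert (E : (x1*x1+x2*x2+x3*x3)*(y1*y1+y2*y2+y3*y3) - (x1*y1+x2*y2+x3*y3)*(x1*y1+x2*y2+x3*y3)
      = (x1*y2-x2*y1)^2 + (x1*y3-x3*y1)^2 + (x2*y3-x3*y2)^2) by ring.
    assert (0 <= (x1*y2-x2*y1)^2 + (x1*y3-x3*y1)^2 + (x2*y3-x3*y2)^2).
    { pose proof (pow2_ge_0 (x1*y2-x2*y1)); pose proof (pow2_ge_0 (x1*y3-x3*y1));
      pose proof (pow2_ge_0 (x2*y3-x3*y2)); lra. }
    lra. }
  assert (HC : C <= sqrt A * sqrt B).
  { rewrite <- sqrt_mult_alt by lra.
    destruct (Rle_or_lt C 0). { pose proof (sqrt_pos (A * B)); lra. }
    rewrite <- (sqrt_square C) by lra. apply sqrt_le_1_alt. lra. }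
  pose proof (sqrt_pos A); pose proof (sqrt_pos B).
  rewrite <- (sqrt_square (sqrt A + sqrt B)) by lra.
  apply sqrt_le_1_alt.
  pose proof (sqrt_sqrt A HA); pose proof (sqrt_sqrt B HB).
  replace ((x1 + y1) * (x1 + y1) + (x2 + y2) * (x2 + y2) + (x3 + y3) * (x3 + y3))
    with (A + 2 * C + B) by (unfold A, B, C; ring).
  nra.
Qed.

Lemma vsub_split x y z : vsub x z = vadd (vsub x y) (vsub y z).
Proof.
  destruct x as [[x1 x2] x3]; destruct y as [[y1 y2] y3]; destruct z as [[z1 z2] z3].
  unfold vsub, vadd, vscale. f_equal; [f_equal|]; ring.
Qed.

Lemma abs_lip f o v a b : signed_distance_function f -> vnorm v = 1 ->
  Rabs (f (ray o v a)) <= Rabs (a - b) + Rabs (f (ray o v b)).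
Proof.
  intros Hf Hv.
  destruct (Rle_or_lt (Rabs (f (ray o v a))) (Rabs (a - b) + Rabs (f (ray o v b)))) as [H|H]; [exact H|].
  exfalso.
  set (e := Rabs (f (ray o v a)) - (Rabs (a - b) + Rabs (f (ray o v b)))).
  destruct (proj2 (Hf (ray o v b)) e) as [z [Hz1 Hz2]]. { unfold e; lra. }
  pose proof (proj1 (Hf (ray o v a)) z Hz1) as K.
  rewrite (vsub_split _ (ray o v b)) in K.
  pose proof (vnorm_tri (vsub (ray o v a) (ray o v b)) (vsub (ray o v b) z)).
  rewrite vsub_ray, vnorm_scale, Hv in *. unfold e in *. lra.
Qed.

Lemma g_cont f o v t : signed_distance_function f -> vnorm v = 1 ->
  continuous (fun t => Rabs (f (ray o v t))) t.
Proof.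
  intros Hf Hv. apply continuity_pt_filterlim.
  intros eps Heps. exists eps. split; [lra|].
  intros x [_ Hx]. simpl in *. unfold R_dist in *.
  pose proof (abs_lip f o v x t Hf Hv). pose proof (abs_lip f o v t x Hf Hv).
  rewrite (Rabs_minus_sym t x) in *.
  apply Rabs_def1; lra.
Qed.

Lemma phi_cont s x : continuous (phi_s s) x.
Proof.
  apply (@ex_derive_continuous R_AbsRing R_NormedModule). unfold phi_s. auto_derive.
  pose proof (exp_pos (- s * x)). nra.
Qed.

Lemma sigma_cont s f o v t : signed_distance_function f -> vnorm v = 1 ->
  continuous (sigma_ray s f o v) t.
Proof.
  intros Hf Hv.
  apply (continuous_ext (fun t => phi_s s (Rabs (f (ray o v t))))).
  { intros; symmetry; apply sigma_abs. }
  apply (continuous_comp (fun t => Rabs (f (ray o v t))) (phi_s s)).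
  - apply g_cont; assumption.
  - apply phi_cont.
Qed.

Lemma phi_der0 s : is_derive (phi_s s) 0 0.
Proof.
  unfold phi_s. auto_derive.
  - rewrite Rmult_0_r, exp_0. lra.
  - rewrite Rmult_0_r, exp_0. field.
Qed.


Lemma is_derive_eq (f : R -> R) x l l' : is_derive f x l -> l = l' -> is_derive f x l'.
Proof. intros H E; subst; exact H. Qed.

Lemma F_der f o v tstar g : vnorm v = 1 ->
  has_gradient f (ray o v tstar) g ->
  is_derive (fun t => f (ray o v t)) tstar (vdot g v).
Proof.
  intros Hv Hg. apply is_derive_Reals. intros eps Heps.
  destruct (Hg (eps / 2)) as [d [Hd H]]; [lra|].
  exists (mkposreal d Hd). intros h Hh0 Hh. simpl in Hh.
  specialize (H (ray o v (tstar + h))).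
  rewrite vsub_ray, vnorm_scale, Hv in H.
  replace (tstar + h - tstar) with h in H by ring.
  assert (E : vdot g (vscale h v) = h * vdot g v).
  { destruct g as [[g1 g2] g3]; destruct v as [[v1 v2] v3]; simpl; ring. }
  rewrite E in H. specialize (H ltac:(lra)).
  assert (Hpos : 0 < Rabs h) by (apply Rabs_pos_lt; exact Hh0).
  replace ((f (ray o v (tstar + h)) - f (ray o v tstar)) / h - vdot g v)
    with ((f (ray o v (tstar + h)) - f (ray o v tstar) - h * vdot g v) / h) by (field; exact Hh0).
  unfold Rdiv. rewrite Rabs_mult, Rabs_inv.
  apply (Rmult_lt_reg_r (Rabs h)); [exact Hpos|].
  rewrite Rmult_assoc, Rinv_l by lra. nra.
Qed.

Theorem mainTheorem2 (s : R) (f : vec3 -> R) (o v : vec3) (tstar : R) :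
  0 < s ->
  signed_distance_function f ->
  vnorm v = 1 ->
  0 < tstar ->
  f (ray o v tstar) = 0 ->
  (* planar patch near t*: the gradient of f along the ray is constant *)
  (exists delta g, 0 < delta /\
     forall t, Rabs (t - tstar) < delta -> has_gradient f (ray o v t) g) ->
  is_derive (weight s f o v) tstar
    (- transmittance s f o v tstar * (phi_s s 0) ^ 2) /\
  - transmittance s f o v tstar * (phi_s s 0) ^ 2 < 0 /\
  ~ local_max_at (weight s f o v) tstar.
Proof.
  intros Hs Hf Hv Ht H0 [delta [g [Hdelta Hg]]].
  set (sg := sigma_ray s f o v).
  assert (Dsg : is_derive sg tstar 0).
  { pose proof (F_der f o v tstar g Hv (Hg tstar ltac:(rewrite Rminus_diag, Rabs_R0; lra))) as DF.
    assert (Dp : is_derive (phi_s s) (f (ray o v tstar)) 0) by (rewrite H0; apply phi_der0).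
    pose proof (is_derive_comp (phi_s s) (fun t => f (ray o v t)) tstar 0 _ Dp DF) as X.
    apply (is_derive_eq _ _ _ _ X). simpl. unfold scal; simpl; unfold mult; simpl. ring. }
  assert (DI : is_derive (RInt sg 0) tstar (sg tstar)).
  { apply (is_derive_RInt sg (RInt sg 0) 0).
    - apply filter_forall. intros b. apply (RInt_correct sg 0 b).
      apply ex_RInt_continuous. intros z _. apply sigma_cont; assumption.
    - apply sigma_cont; assumption. }
  assert (DT : is_derive (transmittance s f o v) tstar
                 (- transmittance s f o v tstar * sg tstar)).
  { pose proof (is_derive_opp _ _ _ DI) as X.
    pose proof (is_derive_comp exp (fun t => opp (RInt sg 0 t)) tstar _ _ (is_derive_exp _) X) as Y.
    apply (is_derive_eq _ _ _ _ Y). unfold scal, opp; simpl. unfold mult; simpl.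
    unfold transmittance. fold sg. ring. }
  assert (Sg0 : sg tstar = phi_s s 0) by (unfold sg, sigma_ray; rewrite H0; reflexivity).
  assert (DW : is_derive (weight s f o v) tstar
                 (- transmittance s f o v tstar * (phi_s s 0) ^ 2)).
  { pose proof (is_derive_mult _ _ _ _ _ DT Dsg ltac:(intros; apply Rmult_comm)) as X.
    apply (is_derive_eq _ _ _ _ X). unfold plus, mult; simpl. rewrite Sg0. ring. }
  assert (Neg : - transmittance s f o v tstar * (phi_s s 0) ^ 2 < 0).
  { assert (0 < transmittance s f o v tstar) by apply exp_pos.
    assert (0 < phi_s s 0).
    { unfold phi_s. rewrite Rmult_0_r, exp_0. 
      apply Rdiv_lt_0_compat; [lra| apply pow_lt; lra]. }
    assert (0 < phi_s s 0 ^ 2) by (apply pow_lt; lra). nra. }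
  split; [exact DW|]. split; [exact Neg|].
  intros [d [Hd Hmax]].
  set (L := - transmittance s f o v tstar * (phi_s s 0) ^ 2) in *.
  apply is_derive_Reals in DW.
  destruct (DW (- L / 2) ltac:(lra)) as [e He].
  set (h := - Rmin d e / 2).
  assert (Hm1 : 0 < Rmin d e) by (apply Rmin_pos; [lra | apply cond_pos]).
  assert (Hm2 : Rmin d e <= d) by apply Rmin_l.
  assert (Hm3 : Rmin d e <= e) by apply Rmin_r.
  assert (Hh : h <> 0) by (unfold h; lra).
  assert (Ha : Rabs h = Rmin d e / 2) by (unfold h; rewrite Rabs_left; lra).
  specialize (He h Hh ltac:(rewrite Ha; lra)).
  specialize (Hmax (tstar + h) ltac:(replace (tstar + h - tstar) with h by ring; rewrite Ha; lra)).
  apply Rabs_def2 in He. destruct He as [He1 He2].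
  assert (Hq : (weight s f o v (tstar + h) - weight s f o v tstar) / h < 0) by lra.
  assert (hneg : h < 0) by (unfold h; lra).
  assert (0 < weight s f o v (tstar + h) - weight s f o v tstar).
  { apply (Rmult_lt_reg_r (- / h)). { apply Ropp_0_gt_lt_contravar, Rinv_lt_0_compat; lra. }
    unfold Rdiv in Hq. lra. }
  lra.
Qed.
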